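(* For $n\ge0$ let $F_n(x,q;q)=\sum_{j=0}^{\lfloor n/2\rfloor}q^{j^2}\begin{bmatrix} n-j\\ j\end{bmatrix}_q x^{n-2j}$. Then for every $n\ge1$, $$\det\left(\begin{bmatrix} i+1\\ j+1\end{bmatrix}_q x^2-\begin{bmatrix} i\\ j-1\end{bmatrix}_q\right)_{i,j=0}^{n-1}=x^nF_n(x,q;q).$$
   Context: Here $q$ is an indeterminate and for integers $m\ge0$ and $j$ the $q$-binomial coefficient is $\begin{bmatrix} m\\ j\end{bmatrix}_q=\frac{(1-q^m)(1-q^{m-1})\cdots(1-q^{m-j+1})}{(1-q)(1-q^2)\cdots(1-q^j)}$ for $0\le j\le m$ and $0$ otherwise. *)

(* Defs.v *)
(* q is the variable of {poly rat}; x is the variable of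
   {poly {poly rat}}; so an element of Q[q][x] is a polynomial in x,q. *)
From HB Require Import structures.
From mathcomp Require Import all_boot all_order all_algebra.
Set Implicit Arguments. Unset Strict Implicit. Unset Printing Implicit Defensive.
Import GRing.Theory.
Local Open Scope ring_scope.

(* The division is exact polynomial division (the quotient is a polynomial). *)
Definition qbinom (m j : nat) : {poly rat} :=
  if (j <= m)%N then
    (\prod_(i < j) (1 - 'X^(m - i))) %/ (\prod_(i < j) (1 - 'X^(i.+1)))
  else 0.

Definition qbinomz (m : nat) (j : int) : {poly rat} :=
  match j with Posz k => qbinom m k | Negz _ => 0 end.

Definition Fn (n : nat) : {poly {poly rat}} :=
  \sum_(j < n./2.+1) (('X^(j * j) * qbinom (n - j) j)%:P * 'X^(n - 2 * j)).

(* Main.v *)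
Require Import Defs.
From HB Require Import structures.
From mathcomp Require Import all_boot all_order all_algebra.
From mathcomp Require Import ring zify.
Import GRing.Theory.
Local Open Scope ring_scope.



Fixpoint gb (m j : nat) : {poly rat} :=
  match m, j with
  | _, 0 => 1
  | 0, _.+1 => 0
  | m'.+1, j'.+1 => gb m' j' + 'X^(j'.+1) * gb m' j'.+1
  end.

Definition qfact (j : nat) : {poly rat} := \prod_(i < j) (1 - 'X^(i.+1)).
Definition qff (m j : nat) : {poly rat} := \prod_(i < j) (1 - 'X^(m - i)).

Lemma gb_gt m j : (m < j)%N -> gb m j = 0.
Proof.
elim: m j => [|m IH] [|j] //= H.
by rewrite !IH ?mulr0 ?addr0 // ltnW.
Qed.

Lemma qff_gt m j : (m < j)%N -> qff m j = 0.
Proof.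
move=> H; rewrite /qff (bigD1 (Ordinal H)) //= subnn expr0 subrr mul0r //.
Qed.

Lemma qfact_neq0 j : qfact j != 0.
Proof.
rewrite /qfact; apply/prodf_neq0 => i _.
apply/negP => /eqP H; have := congr1 (fun p => p.[0]) H.
by rewrite !hornerE expr0n /= subr0 => /eqP; rewrite oner_eq0.
Qed.

Lemma gb_fact m j : gb m j * qfact j = qff m j.
Proof.
elim: m j => [|m IH] [|j].
- by rewrite /qfact /qff !big_ord0 mulr1.
- by rewrite /= mul0r /qff big_ord_recl subn0 expr0 subrr mul0r.
- by rewrite /qfact /qff !big_ord0 mulr1.
rewrite /=.
have E1 : qfact j.+1 = qfact j * (1 - 'X^(j.+1)) by rewrite /qfact big_ord_recr.
have E2 : qff m j.+1 = qff m j * (1 - 'X^(m - j)) by rewrite /qff big_ord_recr.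
have E3 : qff m.+1 j.+1 = (1 - 'X^(m.+1)) * qff m j.
  by rewrite /qff big_ord_recl subn0; congr (_ * _); apply: eq_bigr => i _; rewrite /= subSS.
rewrite mulrDl -mulrA IH E1 mulrA IH E2 E3.
case: (leqP j m) => Hjm.
  have -> : 'X^(m.+1) = 'X^(m - j) * 'X^(j.+1) :> {poly rat} by rewrite -exprD; congr (_ ^+ _); lia.
  ring.
by rewrite qff_gt // !(mulr0, mul0r, addr0).
Qed.

Lemma qbinomE m j : qbinom m j = gb m j.
Proof.
rewrite /qbinom; case: ifP => H.
  by rewrite -/(qff m j) -/(qfact j) -gb_fact mulpK // qfact_neq0.
by rewrite gb_gt // ltnNge H.
Qed.

Lemma qbinom_pascalA m j : qbinom m.+1 j.+1 = qbinom m j + 'X^(j.+1) * qbinom m j.+1.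
Proof. by rewrite !qbinomE. Qed.

Lemma qbinom_pascalB m j : (j <= m)%N ->
  qbinom m.+1 j.+1 = qbinom m j.+1 + 'X^(m - j) * qbinom m j.
Proof.
move=> Hjm; rewrite !qbinomE.
suff H : gb m.+1 j.+1 * qfact j.+1 = (gb m j.+1 + 'X^(m - j) * gb m j) * qfact j.+1.
  exact: (mulIf (qfact_neq0 j.+1)).
have E1 : qfact j.+1 = qfact j * (1 - 'X^(j.+1)) by rewrite /qfact big_ord_recr.
have E2 : qff m j.+1 = qff m j * (1 - 'X^(m - j)) by rewrite /qff big_ord_recr.
have E3 : qff m.+1 j.+1 = (1 - 'X^(m.+1)) * qff m j.
  by rewrite /qff big_ord_recl subn0; congr (_ * _); apply: eq_bigr => i _; rewrite /= subSS.
rewrite gb_fact mulrDl gb_fact E2 E3 E1 -!mulrA (mulrA (gb m j)) gb_fact.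
have -> : 'X^(m.+1) = 'X^(m - j) * 'X^(j.+1) :> {poly rat} by rewrite -exprD; congr (_ ^+ _); lia.
ring.
Qed.

Lemma qbinom0 m : qbinom m 0 = 1.
Proof. by rewrite qbinomE; case: m. Qed.

Lemma qbinomnn m : qbinom m m = 1.
Proof. by rewrite qbinomE; elim: m => //= m ->; rewrite gb_gt // mulr0 addr0. Qed.

Lemma qbinom_gt m j : (m < j)%N -> qbinom m j = 0.
Proof. by move=> H; rewrite qbinomE gb_gt. Qed.



Lemma det_tri (R : comNzRingType) (f : nat -> nat -> R) n :
  (forall i j, (i.+1 < j)%N -> f i j = 0) ->
  (forall i j, (j.+1 < i)%N -> f i j = 0) ->
  \det (\matrix_(i < n.+2, j < n.+2) f i j) =
    f n.+1 n.+1 * \det (\matrix_(i < n.+1, j < n.+1) f i j)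
    - f n.+1 n * f n n.+1 * \det (\matrix_(i < n, j < n) f i j).
Proof.
move=> Hu Hl.
rewrite (expand_det_row _ ord_max) !big_ord_recr /=.
rewrite big1 ?add0r; last first.
  by move=> j _; rewrite mxE Hl ?mul0r //= ltnS ltn_ord.
rewrite !mxE /cofactor /=.
have -> : row' ord_max (col' ord_max (\matrix_(i < n.+2, j < n.+2) f i j))
   = \matrix_(i < n.+1, j < n.+1) f i j.
  by apply/matrixP => i j; rewrite !mxE !lift_max.
pose B := row' ord_max (col' (widen_ord (leqnSn n.+1) ord_max) (\matrix_(i < n.+2, j < n.+2) f i j)).
rewrite -/B.
rewrite (expand_det_col B ord_max) big_ord_recr /=.
rewrite big1 ?add0r; last first.
  move=> i _; rewrite /B !mxE lift_max /= /bump.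
  by rewrite leqnn Hu ?mul0r // add1n ltnS ltn_ord.
rewrite /cofactor.
have -> : row' ord_max (col' ord_max B)
   = \matrix_(i < n, j < n) f i j.
  apply/matrixP => i j; rewrite !mxE !lift_max /= /bump.
  have Hj : (n <= j)%N = false by rewrite leqNgt ltn_ord.
  by rewrite Hj /= add0n Hj.
rewrite /B !mxE !lift_max /= /bump.
rewrite leqnn add1n.
have s1 : (-1) ^+ (n.+1 + n) = -1 :> R by rewrite addSn addnn -signr_odd /= odd_double.
have s2 : (-1) ^+ (n + n) = 1 :> R by rewrite addnn -signr_odd odd_double.
have s3 : (-1) ^+ (n.+1 + n.+1) = 1 :> R by rewrite addnn -signr_odd odd_double.
rewrite s1 s2 s3.
ring.
Qed.



Definition term (m j : nat) : {poly {poly rat}} :=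
  ('X^(j * j) * qbinom (m - j) j)%:P * 'X^(m - 2 * j).

Lemma Fn_widen {m K : nat} : (m./2 < K)%N -> Fn m = \sum_(j < K) term m j.
Proof.
move=> H; rewrite /Fn (big_ord_widen K (fun j => term m j) H) big_mkcond /=.
apply: eq_bigr => j _; case: ifP => // Hj.
rewrite /term qbinom_gt ?mulr0 ?mul0r //.
move: Hj; rewrite ltnS leqNgt => /negbFE; rewrite ltn_half_double -addnn => Hj; lia.
Qed.

Lemma term_rec j a : term (j + j + a).+2 j.+1 =
  'X * term (j + j + a).+1 j.+1 + ('X^((j + j + a).+1))%:P * term (j + j + a) j.
Proof.
rewrite /term.
have -> : ((j + j + a).+2 - j.+1 = (j + a).+1)%N by lia.
have -> : ((j + j + a).+1 - j.+1 = j + a)%N by lia.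
have -> : ((j + j + a) - j = j + a)%N by lia.
have -> : ((j + j + a).+2 - 2 * j.+1 = a)%N by lia.
have -> : ((j + j + a) - 2 * j = a)%N by lia.
rewrite qbinom_pascalB; last by lia.
have -> : (j + a - j = a)%N by lia.
case: a => [|a].
  rewrite (@qbinom_gt (j + 0) j.+1); last by lia.
  rewrite !addn0 !(mulr0, add0r, rmorph0, mul0r).
  have -> : (j.+1 * j.+1 = j * j + (j + j).+1)%N by lia.
  rewrite exprD !rmorphM /=.
  ring.
have -> : ((j + j + a.+1).+1 - 2 * j.+1 = a)%N by lia.
have -> : (j.+1 * j.+1 = j * j + (j + j).+1)%N by lia.
have -> : ((j + j + a.+1).+1 = (j + j).+1 + a.+1)%N by lia.
rewrite !exprD !(exprS _ a) !(polyCD, polyCM).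
ring.
Qed.

Lemma Fn_rec n : Fn n.+2 = 'X * Fn n.+1 + ('X^(n.+1))%:P * Fn n.
Proof.
have H1 : ((n.+2)./2 < (n./2).+2)%N by [].
have H2 : ((n.+1)./2 < (n./2).+2)%N.
  by rewrite ltnS (half_leq (leqnSn n.+1)).
have H3 : (n./2 < (n./2).+1)%N by [].
rewrite (Fn_widen H1) (Fn_widen H2) (Fn_widen H3).
rewrite (big_ord_recl (n./2).+1) (big_ord_recl (n./2).+1) /=.
rewrite mulrDr !mulr_sumr -addrA -big_split /=.
congr (_ + _).
  by rewrite /term !subn0 !muln0 !qbinom0 exprS !mul1r.
apply: eq_bigr => i _.
have Hi := ltn_ord i; move: (nat_of_ord i) Hi => k Hk.
move: Hk; rewrite ltnS geq_half_double -addnn => Hk.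
have [a Ea] : exists a, n = (k + k + a)%N by exists (n - (k + k))%N; lia.
by rewrite Ea /bump /= add1n term_rec.
Qed.



Definition tt3 (k j : nat) : {poly {poly rat}} :=
  (if k == j then 'X^2 else 0) + (if k == j.+1 then ('X^k)%:P * 'X^2 else 0)
  - (if k.+1 == j then 1 else 0).

Lemma detT n : \det (\matrix_(i < n, j < n) tt3 i j) = 'X^n * Fn n.
Proof.
suff : \det (\matrix_(i < n, j < n) tt3 i j) = 'X^n * Fn n /\
       \det (\matrix_(i < n.+1, j < n.+1) tt3 i j) = 'X^(n.+1) * Fn n.+1 by case.
elim: n => [|n [IH1 IH2]].
  split.
    by rewrite det_mx00 /Fn big_ord1 /= qbinom0 !muln0 !subn0 !expr0 !mul1r.
  rewrite (det_mx11 (\matrix_(i<1,j<1) tt3 i j)) mxE /tt3 /= /Fn big_ord1 /= qbinom0 !mul1r addr0 subr0 muln0 subn0.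
  by rewrite expr1 expr2.
split => //.
rewrite det_tri; last 2 first.
- by move=> i j H; rewrite /tt3 !ifF ?addr0 ?subr0 //; apply/eqP; lia.
- by move=> i j H; rewrite /tt3 !ifF ?addr0 ?subr0 //; apply/eqP; lia.
rewrite IH1 IH2 Fn_rec /tt3 !eqxx !ifF; try by apply/eqP; lia.
rewrite !exprS; ring.
Qed.



Lemma sum_delta (R : nmodType) n v (F : nat -> R) :
  \sum_(k < n) (if (k : nat) == v then F k else 0) = if (v < n)%N then F v else 0.
Proof.
elim: n => [|n IH]; first by rewrite big_ord0.
rewrite big_ord_recr /= IH.
case: eqP => [<-|NE]; first by rewrite ltnn leqnn add0r.
have -> : (v < n.+1)%N = (v < n)%N.
  by rewrite ltnS leq_eqVlt; case: (v =P n) => // E; case: NE.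
by rewrite addr0.
Qed.

Lemma mul_if (R : pzRingType) (a x : R) (b : bool) :
  a * (if b then x else 0) = if b then a * x else 0.
Proof. by case: b; rewrite ?mulr0. Qed.

Theorem proposition8 (n : nat) : (0 < n)%N ->
  \det (\matrix_(i < n, j < n)
          ((qbinom i.+1 j.+1)%:P * 'X^2 - (qbinomz i (j%:Z - 1))%:P)
        : 'M[{poly {poly rat}}]_n)
  = 'X^n * Fn n.
Proof.
move=> _.
rewrite (_ : \matrix_(i < n, j < n) _ =
   (\matrix_(i < n, k < n) (qbinom i k)%:P) *m (\matrix_(k < n, j < n) tt3 k j)).
  rewrite det_mulmx detT det_trig.
    by rewrite big1 ?mul1r // => i _; rewrite mxE qbinomnn.
  by apply/is_trig_mxP => i j H; rewrite mxE qbinom_gt.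
apply/matrixP => i j; rewrite !mxE.
under eq_bigr => k _ do rewrite !mxE /tt3 mulrBr mulrDr !mul_if.
rewrite sumrB big_split /=.
rewrite (sum_delta _ _ j (fun k => (qbinom i k)%:P * 'X^2)).
rewrite (sum_delta _ _ j.+1 (fun k => (qbinom i k)%:P * (('X^k)%:P * 'X^2))).
rewrite ltn_ord qbinom_pascalA.
have Hi := ltn_ord i.
move: (nat_of_ord j) (ltn_ord j) => jj Hj.
move: (nat_of_ord i) Hi => ii Hi.
have -> : (if (jj.+1 < n)%N then (qbinom ii jj.+1)%:P * (('X^(jj.+1))%:P * 'X^2) else 0)
   = (qbinom ii jj.+1)%:P * (('X^(jj.+1))%:P * 'X^2).
  case: ifP => // H; rewrite qbinom_gt ?rmorph0 ?mul0r //; lia.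
case: jj Hj => [|jj] Hj.
  rewrite big1 => [|k _]; last by [].
  rewrite /qbinomz /= rmorph0 subr0 rmorphD rmorphM /=. 
  by rewrite subr0; ring.
have E : (Posz jj.+1 - 1 = Posz jj)%R by rewrite -[jj.+1]addn1 PoszD addrK.
rewrite E /qbinomz.
under eq_bigr => k _ do rewrite eqSS mulr1.
rewrite (sum_delta _ _ jj (fun k => (qbinom ii k)%:P)).
have -> : (jj < n)%N by lia.
rewrite rmorphD rmorphM /=.
ring.
Qed.
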